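(* For every integer $x\geq 3$ and each $i\in[1,8]$, there exists a $D_i$-decomposition of the digraph $K^*_{(2x)\times 7}-xK^*_{7,7}$, i.e.\ of the digraph with vertex set $H_1\cup\dots\cup H_{2x}$ (pairwise disjoint sets $H_j$ with $|H_j|=7$) whose arcs are all $(a,b)$ with $a\in H_j$, $b\in H_k$, $j\neq k$, except those with $\{j,k\}=\{2m-1,2m\}$ for some $m\in[1,x]$.
   Context: For a simple graph $G$, $G^*$ is the digraph with vertex set $V(G)$ and arc set $\bigcup_{\{x,y\}\in E(G)}\{(x,y),(y,x)\}$. $K_{r\times s}$ is the complete multipartite simple graph with $r$ parts each of size $s$, $K^*_{r\times s}=(K_{r\times s})^*$, and $K^*_{7,7}=(K_{7,7})^*$. A $D$-decomposition of a digraph $K$ is a set of subdigraphs of $K$, each isomorphic to $D$, such that every arc of $K$ lies in exactly one of them. For distinct vertices $v_0,\dots,v_6$, the digraphs $D_i[v_0,v_1,\dots,v_6]$ ($i\in[1,8]$) all have vertex set $\{v_0,\dots,v_6\}$ and the following arc sets: $D_1$: $(v_1,v_0),(v_1,v_2),(v_2,v_3),(v_3,v_4),(v_4,v_5),(v_5,v_6),(v_6,v_0)$; $D_2$: $(v_1,v_0),(v_2,v_1),(v_2,v_3),(v_3,v_4),(v_4,v_5),(v_5,v_6),(v_6,v_0)$; $D_3$: $(v_1,v_0),(v_1,v_2),(v_3,v_2),(v_3,v_4),(v_4,v_5),(v_5,v_6),(v_6,v_0)$; $D_4$: $(v_1,v_0),(v_1,v_2),(v_2,v_3),(v_4,v_3),(v_4,v_5),(v_5,v_6),(v_6,v_0)$;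 $D_5$: $(v_1,v_0),(v_2,v_1),(v_3,v_2),(v_3,v_4),(v_4,v_5),(v_5,v_6),(v_6,v_0)$; $D_6$: $(v_1,v_0),(v_2,v_1),(v_2,v_3),(v_3,v_4),(v_5,v_4),(v_5,v_6),(v_6,v_0)$; $D_7$: $(v_1,v_0),(v_1,v_2),(v_3,v_2),(v_3,v_4),(v_4,v_5),(v_6,v_5),(v_6,v_0)$; $D_8$: $(v_1,v_0),(v_2,v_1),(v_2,v_3),(v_4,v_3),(v_4,v_5),(v_5,v_6),(v_6,v_0)$. $D_i$ also denotes the isomorphism type of $D_i[v_0,\dots,v_6]$. *)

(* Defs.v *)
From mathcomp Require Import all_boot.
Set Implicit Arguments. Unset Strict Implicit. Unset Printing Implicit Defensive.

(* Arc lists of D_1..D_8 on vertex indices v_0..v_6 (v_k is index k). *)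
Definition D_arcs (i : nat) : seq (nat * nat) :=
  match i with
  | 1 => [:: (1,0); (1,2); (2,3); (3,4); (4,5); (5,6); (6,0)]
  | 2 => [:: (1,0); (2,1); (2,3); (3,4); (4,5); (5,6); (6,0)]
  | 3 => [:: (1,0); (1,2); (3,2); (3,4); (4,5); (5,6); (6,0)]
  | 4 => [:: (1,0); (1,2); (2,3); (4,3); (4,5); (5,6); (6,0)]
  | 5 => [:: (1,0); (2,1); (3,2); (3,4); (4,5); (5,6); (6,0)]
  | 6 => [:: (1,0); (2,1); (2,3); (3,4); (5,4); (5,6); (6,0)]
  | 7 => [:: (1,0); (1,2); (3,2); (3,4); (4,5); (6,5); (6,0)]
  | 8 => [:: (1,0); (2,1); (2,3); (4,3); (4,5); (5,6); (6,0)]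
  | _ => [::]
  end.

Definition copy_arcs (T : finType) (A : seq (nat * nat)) (f : {ffun 'I_7 -> T})
  : seq (T * T) :=
  [seq (f (inord p.1), f (inord p.2)) | p <- A].

Definition is_decomposition (T : finType) (K : rel T) (A : seq (nat * nat))
  (B : seq {ffun 'I_7 -> T}) : Prop :=
  (forall f, f \in B -> injective f /\ (forall e, e \in copy_arcs A f -> K e.1 e.2))
  /\ (forall a b, K a b -> count (fun f => (a, b) \in copy_arcs A f) B = 1).

(* Vertices of K*_{(2x) x 7} - x K*_{7,7}: part H_j (j < 2x, 0-indexed) times
   an index in 'I_7.  Removed pairs of parts: {2m, 2m+1} (0-indexed). *)
Definition Vx (x : nat) : finType := ('I_(2 * x) * 'I_7)%type.

Definition Kx (x : nat) : rel (Vx x) :=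
  fun a b => ((a.1 : nat) %/ 2 != (b.1 : nat) %/ 2).

(* Main.v *)
Require Import Defs.
From mathcomp Require Import all_boot zify.
Set Implicit Arguments. Unset Strict Implicit. Unset Printing Implicit Defensive.

Definition red (m v : nat) := if v < m then v else if v < 2 * m then v - m else v - 2 * m.
Definition sub (m g c : nat) := if c <= g then g - c else g + m - c.
Definition dlt (m g g' : nat) := if g <= g' then g' - g else g' + m - g.
Definition hlf (m D : nat) := if odd D then (D + m)./2 else D./2.
Definition solve (m a b D : nat) :=
  match a, b with
  | 0, 1 | 1, 2 => D
  | 1, 0 | 2, 1 => m - D
  | 0, 2 => hlf m D
  | 2, 0 => hlf m (m - D)
  | _, _ => 0
  end.

Lemma redP m v : (v < m /\ red m v = v) \/ (m <= v < 2 * m /\ red m v = v - m) \/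
  (2 * m <= v /\ red m v = v - 2 * m).
Proof. rewrite /red; case: ifP => ?; [|case: ifP => ?]; lia. Qed.
Lemma subP m g c : (c <= g /\ sub m g c = g - c) \/ (g < c /\ sub m g c = g + m - c).
Proof. rewrite /sub; case: ifP => ?; lia. Qed.
Lemma dltP m g c : (g <= c /\ dlt m g c = c - g) \/ (c < g /\ dlt m g c = c + m - g).
Proof. rewrite /dlt; case: ifP => ?; lia. Qed.
Lemma hlfP m D : (odd D /\ hlf m D = (D + m)./2) \/ (odd D = false /\ hlf m D = D./2).
Proof. rewrite /hlf; case: ifP => ?; lia. Qed.

Ltac gen1 f P :=
  let r := fresh "r" in let H := fresh "H" in
  pose proof P as H; set (r := f) in *; clearbody r.
Ltac gen_all := repeat match goal with
 | |- context[red ?m ?v] => gen1 (red m v) (redP m v)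
 | _ : context[red ?m ?v] |- _ => gen1 (red m v) (redP m v)
 | |- context[sub ?m ?v ?w] => gen1 (sub m v w) (subP m v w)
 | _ : context[sub ?m ?v ?w] |- _ => gen1 (sub m v w) (subP m v w)
 | |- context[dlt ?m ?v ?w] => gen1 (dlt m v w) (dltP m v w)
 | _ : context[dlt ?m ?v ?w] |- _ => gen1 (dlt m v w) (dltP m v w)
 | |- context[hlf ?m ?v] => gen1 (hlf m v) (hlfP m v)
 | _ : context[hlf ?m ?v] |- _ => gen1 (hlf m v) (hlfP m v)
 end.

Ltac dsj := repeat match goal with H : _ \/ _ |- _ => destruct H as [H|H] end;
  repeat match goal with H : _ /\ _ |- _ => destruct H end; subst.
Ltac crush := gen_all; dsj; lia.

Lemma red_lt m v : 0 < m -> v < 3 * m -> red m v < m.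
Proof. intros; crush. Qed.

Lemma AL1 m a b d g : odd m -> 3 <= m -> 1 <= d < m -> g < m -> a <= 2 -> b <= 2 -> a != b ->
  solve m a b (dlt m (red m (a * d + g)) (red m (b * d + g))) = d.
Proof.
move=> Hm H3 Hd Hg Ha Hb Hab.
case: a Ha Hab => [|[|[|a]]] // _; case: b Hb => [|[|[|b]]] // _ _;
  rewrite /solve; crush.
Qed.

Lemma AL2 m a d g : 3 <= m -> d < m -> g < m -> a <= 2 ->
  sub m (red m (a * d + g)) (red m (a * d)) = g.
Proof.
move=> H3 Hd Hg Ha.
case: a Ha => [|[|[|a]]] // _; crush.
Qed.

Lemma G1 m v g : 0 < m -> v < 2 * m -> g < m -> red m (v + sub m g (red m v)) = g.
Proof. intros; crush. Qed.

Lemma G2 m v w g g' : 0 < m -> v < 2 * m -> w < 2 * m -> g < m -> g' < m ->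
  red m w = red m (v + dlt m g g') -> red m (w + sub m g (red m v)) = g'.
Proof. intros; crush. Qed.

Lemma G3 m a b D : odd m -> 3 <= m -> 1 <= D < m -> a <= 2 -> b <= 2 -> a != b ->
  let d := solve m a b D in 1 <= d < m /\ red m (b * d) = red m (a * d + D).
Proof.
move=> Hm H3 HD Ha Hb Hab /=.
case: a Ha Hab => [|[|[|a]]] // _; case: b Hb => [|[|[|b]]] // _ _;
  rewrite /solve; gen_all; dsj; split; lia.
Qed.


Lemma dlt_bounds m g g' : g < m -> g' < m -> g != g' -> 1 <= dlt m g g' < m.
Proof. intros; crush. Qed.

Lemma AL3 m a b g g' : odd m -> 3 <= m -> g < m -> g' < m -> g != g' ->
  a <= 2 -> b <= 2 -> a != b ->
  let d := solve m a b (dlt m g g') in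
  [/\ 1 <= d < m, red m (a * d + sub m g (red m (a * d))) = g &
      red m (b * d + sub m g (red m (a * d))) = g'].
Proof.
move=> Hm H3 Hg Hg' Hgg Ha Hb Hab /=.
have HD := dlt_bounds Hg Hg' Hgg.
have [Hd E] := G3 Hm H3 HD Ha Hb Hab.
split => //.
- apply: G1 => //; [lia| nia].
- apply: G2 => //; [lia|nia|nia].
Qed.
Lemma AL4 m a b d g : odd m -> 3 <= m -> 1 <= d < m -> g < m -> a <= 2 -> b <= 2 -> a != b ->
  red m (a * d + g) != red m (b * d + g).
Proof.
move=> Hm H3 Hd Hg Ha Hb Hab.
case: a Ha Hab => [|[|[|a]]] // _; case: b Hb => [|[|[|b]]] // _ _; apply/eqP; crush.
Qed.

Lemma AL5 m c g : 3 <= m -> g < m -> c <= 2 -> sub m (red m (c + g)) c = g.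
Proof. intros; crush. Qed.

Lemma AL6 m c g : 3 <= m -> g < m -> c <= 2 -> red m (c + sub m g c) = g.
Proof. intros; crush. Qed.

Lemma div2E r h : h <= 1 -> (2 * r + h) %/ 2 = r. Proof. move=> *; lia. Qed.
Lemma mod2E r h : h <= 1 -> (2 * r + h) %% 2 = h. Proof. move=> *; lia. Qed.
Lemma d7E u v al : u < 7 -> v < 7 -> al < 7 ->
  ((v + al) %% 7 + 7 - (u + al) %% 7) %% 7 = (v + 7 - u) %% 7.
Proof. move=> *; lia. Qed.
Lemma a7E u al : u < 7 -> al < 7 -> ((u + al) %% 7 + 7 - u) %% 7 = al.
Proof. move=> *; lia. Qed.

Section Gen.
Variable A : seq (nat * nat).
Variables eL aL sK sC sE sA : seq (seq nat).
Variables rk1 rk2 : nat.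

Definition Pt (t : nat) := nth 0 [:: 0; 1; 0; 1; 0; 1; 2] t.
Definition pe e := (nth (0,0) A e).1.
Definition qe e := (nth (0,0) A e).2.
Definition eta k t := nth 0 (nth [::] eL k) t.
Definition av k t := nth 0 (nth [::] aL k) t.
Definition sinf s t := nth 0 (nth [::] sK s) t == 1.
Definition sc s t := nth 0 (nth [::] sC s) t.
Definition se s t := nth 0 (nth [::] sE s) t.
Definition sa s t := nth 0 (nth [::] sA s) t.
Definition dcl k e := (eta k (pe e), eta k (qe e), (av k (qe e) + 7 - av k (pe e)) %% 7).
Definition scl s e := (se s (pe e), se s (qe e), (sa s (qe e) + 7 - sa s (pe e)) %% 7).
Definition kind s e := sinf s (pe e) + 2 * sinf s (qe e).
Definition KE := [seq (k, e) | k <- iota 0 4, e <- iota 0 7].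
Definition SE := [seq (s, e) | s <- iota 0 10, e <- iota 0 7].
Definition LF c := nth (0,0) KE (find (fun ke => dcl ke.1 ke.2 == c) KE).
Definition LK j c := nth (0,0) SE (find (fun z => (kind z.1 z.2 == j) && (scl z.1 z.2 == c)) SE).
Definition RM k e := LK 0 (dcl k e).
Definition isrem k := (k == rk1) || (k == rk2).
Definition CL := [seq (hh.1, hh.2, d) | hh <- [seq (h, h') | h <- iota 0 2, h' <- iota 0 2],
                                        d <- iota 0 7].

Definition gd1 := (size A == 7) &&
  all (fun e => (pe e < 7) && (qe e < 7) && (Pt (pe e) != Pt (qe e))) (iota 0 7).
Definition gd2 := all (fun k => all (fun t => (eta k t <= 1) && (av k t < 7)) (iota 0 7)) (iota 0 4).
Definition gd3 := all (fun k => all (fun t => all (fun t' => (t == t') || (Pt t != Pt t') ||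
   (eta k t != eta k t') || (av k t != av k t')) (iota 0 7)) (iota 0 7)) (iota 0 4).
Definition gd4 := all (fun k => all (fun e => LF (dcl k e) == (k, e)) (iota 0 7)) (iota 0 4).
Definition gd5 := all (fun c => let ke := LF c in (ke.1 < 4) && (ke.2 < 7) && (dcl ke.1 ke.2 == c)) CL.
Definition gd6 := all (fun s => all (fun t => (se s t <= 1) && (sa s t < 7) && (sc s t <= 2))
   (iota 0 7)) (iota 0 10).
Definition gd7 := all (fun s => all (fun t => all (fun t' => (t == t') || (sinf s t != sinf s t') ||
   (sinf s t && ((se s t != se s t') || (sa s t != sa s t'))) ||
   (~~ sinf s t && ((sc s t != sc s t') || (se s t != se s t') || (sa s t != sa s t'))))
   (iota 0 7)) (iota 0 7)) (iota 0 10).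
Definition gd8 := all (fun s => all (fun e =>
   match kind s e with
   | 0 => let ke := LF (scl s e) in [&& isrem ke.1, ke.2 < 7, sc s (pe e) == Pt (pe ke.2),
                                        sc s (qe e) == Pt (qe ke.2) & RM ke.1 ke.2 == (s, e)]
   | 1 => LK 1 (scl s e) == (s, e)
   | 2 => LK 2 (scl s e) == (s, e)
   | _ => false end) (iota 0 7)) (iota 0 10).
Definition gd9 := all (fun c => all (fun j => let z := LK j c in
   [&& z.1 < 10, z.2 < 7, kind z.1 z.2 == j & scl z.1 z.2 == c]) [:: 1; 2]) CL.
Definition gd10 := all (fun k => all (fun e => let z := RM k e in
   [&& z.1 < 10, z.2 < 7, kind z.1 z.2 == 0, scl z.1 z.2 == dcl k e,
       sc z.1 (pe z.2) == Pt (pe e) & sc z.1 (qe z.2) == Pt (qe e)]) (iota 0 7)) [:: rk1; rk2].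
Definition good := [&& gd1, gd2, gd3, gd4, gd5, gd6, gd7, gd8, gd9, gd10, rk1 < 4 & rk2 < 4].

Hypothesis Hgood : good.

Lemma Pt_le t : Pt t <= 2.
Proof. rewrite /Pt; case: t => [|[|[|[|[|[|[|t]]]]]]] //=; by case: t. Qed.

Lemma inI n k : (k \in iota 0 n) = (k < n).
Proof. by rewrite mem_iota. Qed.

Lemma gA e : e < 7 -> [/\ pe e < 7, qe e < 7 & Pt (pe e) != Pt (qe e)].
Proof.
move: Hgood => /and5P [/andP [_ H] _ _ _ _] He.
by move: (allP H e); rewrite inI => /(_ He) /andP [/andP [-> ->] ->].
Qed.
Lemma sizeA : size A = 7.
Proof. by move: Hgood => /and5P [/andP [/eqP -> _] _ _ _ _]. Qed.

Lemma gB k t : k < 4 -> t < 7 -> eta k t <= 1 /\ av k t < 7.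
Proof.
move: Hgood => /and5P [_ H _ _ _] Hk Ht.
by move: (allP H k); rewrite inI => /(_ Hk) /allP /(_ t); rewrite inI => /(_ Ht) /andP [-> ->].
Qed.

Lemma gds : [/\ gd1, gd2, gd3, gd4 & [/\ gd5, gd6, gd7, gd8 & [/\ gd9, gd10, rk1 < 4 & rk2 < 4]]].
Proof.
by move: Hgood; rewrite /good => /and5P [-> -> -> -> /and5P [-> -> -> -> /and4P [-> -> -> ->]]].
Qed.

Lemma allI (P : pred nat) n k : all P (iota 0 n) -> k < n -> P k.
Proof. by move=> /allP H Hk; apply: H; rewrite inI. Qed.

Lemma CL_mem h h' d : h < 2 -> h' < 2 -> d < 7 -> (h, h', d) \in CL.
Proof.
move=> Hh Hh' Hd; apply/allpairsP; exists ((h, h'), d); split => //; last by rewrite inI.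
by apply/allpairsP; exists (h, h'); split => //; rewrite inI.
Qed.

Lemma gC k t t' : k < 4 -> t < 7 -> t' < 7 -> t != t' ->
  (Pt t != Pt t') || (eta k t != eta k t') || (av k t != av k t').
Proof.
case: gds => _ _ H _ _ Hk Ht Ht' Htt.
move: (allI (allI (allI H Hk) Ht) Ht'). by rewrite (negPf Htt).
Qed.

Lemma gD k e : k < 4 -> e < 7 -> LF (dcl k e) = (k, e).
Proof. case: gds => _ _ _ H _ Hk He. exact/eqP/(allI (allI H Hk) He). Qed.

Lemma gE h h' d : h < 2 -> h' < 2 -> d < 7 ->
  [/\ (LF (h, h', d)).1 < 4, (LF (h, h', d)).2 < 7 &
      dcl (LF (h, h', d)).1 (LF (h, h', d)).2 = (h, h', d)].
Proof.
case: gds => _ _ _ _ [H _ _ _ _] Hh Hh' Hd.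
by move: (allP H _ (CL_mem Hh Hh' Hd)) => /= /andP [/andP [-> ->] /eqP ->].
Qed.

Lemma gF s t : s < 10 -> t < 7 -> [/\ se s t <= 1, sa s t < 7 & sc s t <= 2].
Proof.
case: gds => _ _ _ _ [_ H _ _ _] Hs Ht.
by move: (allI (allI H Hs) Ht) => /andP [/andP [-> ->] ->].
Qed.

Lemma gG s t t' : s < 10 -> t < 7 -> t' < 7 -> t != t' ->
  [|| sinf s t != sinf s t',
      sinf s t && ((se s t != se s t') || (sa s t != sa s t')) |
      ~~ sinf s t && [|| sc s t != sc s t', se s t != se s t' | sa s t != sa s t']].
Proof.
case: gds => _ _ _ _ [_ _ H _ _] Hs Ht Ht' Htt.
move: (allI (allI (allI H Hs) Ht) Ht'). rewrite (negPf Htt) /=.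
by rewrite !orbA.
Qed.

Lemma gH s e : s < 10 -> e < 7 ->
   match kind s e with
   | 0 => let ke := LF (scl s e) in [&& isrem ke.1, ke.2 < 7, sc s (pe e) == Pt (pe ke.2),
                                        sc s (qe e) == Pt (qe ke.2) & RM ke.1 ke.2 == (s, e)]
   | 1 => LK 1 (scl s e) == (s, e)
   | 2 => LK 2 (scl s e) == (s, e)
   | _ => false end.
Proof. case: gds => _ _ _ _ [_ _ _ H _] Hs He. exact: (allI (allI H Hs) He). Qed.

Lemma gI j h h' d : (j == 1) || (j == 2) -> h < 2 -> h' < 2 -> d < 7 ->
  [/\ (LK j (h, h', d)).1 < 10, (LK j (h, h', d)).2 < 7,
      kind (LK j (h, h', d)).1 (LK j (h, h', d)).2 = j &
      scl (LK j (h, h', d)).1 (LK j (h, h', d)).2 = (h, h', d)].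
Proof.
case: gds => _ _ _ _ [_ _ _ _ [H _ _ _]] Hj Hh Hh' Hd.
move: (allP H _ (CL_mem Hh Hh' Hd)) => /= /andP [H1 /andP [H2 _]].
by case/orP: Hj => /eqP ->; [move: H1|move: H2] => /and4P [-> -> /eqP -> /eqP ->].
Qed.

Lemma gJ k e : isrem k -> e < 7 ->
  [/\ (RM k e).1 < 10, (RM k e).2 < 7, kind (RM k e).1 (RM k e).2 = 0,
      scl (RM k e).1 (RM k e).2 = dcl k e &
      sc (RM k e).1 (pe (RM k e).2) = Pt (pe e) /\ sc (RM k e).1 (qe (RM k e).2) = Pt (qe e)].
Proof.
case: gds => _ _ _ _ [_ _ _ _ [_ H _ _]] Hk He.
have Hk' : k \in [:: rk1; rk2] by rewrite !inE.
move: (allI (allP H k Hk') He) => /and5P [-> -> /eqP -> /eqP -> /andP [/eqP -> /eqP ->]].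
by [].
Qed.

Lemma rk_lt k : isrem k -> k < 4.
Proof. case: gds => _ _ _ _ [_ _ _ _ [_ _ H1 H2]]. by case/orP => /eqP ->. Qed.

Section Main.
Variables (x m : nat) (inf : bool).
Hypotheses (Hxm : x = m + inf) (Hm : odd m) (Hm3 : 3 <= m).

Definition nd := 4 * (m - 1).
Definition isS n := nd <= n.
Definition valid n := ((n < nd) && ~~ [&& inf, n %/ 4 == 0 & isrem (n %% 4)]) ||
                      [&& inf, nd <= n & n < nd + 10].
Definition vinf n t := isS n && sinf (n - nd) t.
Definition vgv n t := if isS n then sc (n - nd) t else Pt t * (n %/ 4 + 1).
Definition veta n t := if isS n then se (n - nd) t else eta (n %% 4) t.
Definition vav n t := if isS n then sa (n - nd) t else av (n %% 4) t.
Definition VJ n g t := if vinf n t then 2 * m + veta n t else 2 * red m (vgv n t + g) + veta n t.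
Definition VA n a t := (vav n t + a) %% 7.

Definition dec (J a J' a' : nat) : nat * (nat * nat) :=
  let g := J %/ 2 in let h := J %% 2 in let g' := J' %/ 2 in let h' := J' %% 2 in
  let c := (h, h', (a' + 7 - a) %% 7) in
  if (g < m) && (g' < m) then
    let ke := LF c in
    let d := solve m (Pt (pe ke.2)) (Pt (qe ke.2)) (dlt m g g') in
    if [&& inf, d == 1 & isrem ke.1] then
      let z := RM ke.1 ke.2 in
      (nd + z.1, (sub m g (sc z.1 (pe z.2)), (a + 7 - sa z.1 (pe z.2)) %% 7))
    else (4 * (d - 1) + ke.1, (sub m g (red m (Pt (pe ke.2) * d)), (a + 7 - av ke.1 (pe ke.2)) %% 7))
  else if g < m then
    let z := LK 2 c in (nd + z.1, (sub m g (sc z.1 (pe z.2)), (a + 7 - sa z.1 (pe z.2)) %% 7))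
  else
    let z := LK 1 c in (nd + z.1, (sub m g' (sc z.1 (qe z.2)), (a' + 7 - sa z.1 (qe z.2)) %% 7)).

Lemma m0 : 0 < m. Proof. lia. Qed.

Lemma validS n : valid n -> isS n -> [/\ inf, n - nd < 10 & nd + (n - nd) = n].
Proof. rewrite /valid /isS => /orP [/andP [H _]|/and3P [-> H1 H2]] H3; [lia|split => //; lia]. Qed.

Lemma validD n : valid n -> ~~ isS n ->
  [/\ n %% 4 < 4, 1 <= n %/ 4 + 1 < m & ~~ [&& inf, n %/ 4 + 1 == 1 & isrem (n %% 4)]].
Proof.
rewrite /valid /isS -ltnNge => /orP [/andP [H1 H2]|/and3P [_ H1 H2]] H3; last lia.
split; [lia|rewrite /nd in H1; lia|]. by rewrite addn1 eqSS.
Qed.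

Lemma decU n g a e : valid n -> g < m -> a < 7 -> e < 7 ->
  dec (VJ n g (pe e)) (VA n a (pe e)) (VJ n g (qe e)) (VA n a (qe e)) = (n, (g, a)).
Proof.
move=> Hv Hg Ha He.
have [Hp Hq HPpq] := gA He.
rewrite /dec /VJ /VA /vinf /vgv /veta /vav.
case Hs: (isS n) => /=.
- have [Hi Hs10 Hn] := validS Hv Hs.
  move: Hs10 Hn; move Hsdef: (n - nd) => s Hs10 Hn.
  have [Hse1 Hsa1 Hsc1] := gF Hs10 Hp.
  have [Hse2 Hsa2 Hsc2] := gF Hs10 Hq.
  have := gH Hs10 He. rewrite /kind.
  have Hr1 : red m (sc s (pe e) + g) < m by apply: red_lt; lia.
  have Hr2 : red m (sc s (qe e) + g) < m by apply: red_lt; lia.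
  have Hscl : (se s (pe e), se s (qe e), (sa s (qe e) + 7 - sa s (pe e)) %% 7) = scl s e by [].
  case Hip: (sinf s (pe e)); case Hiq: (sinf s (qe e)) => //=;
  rewrite !div2E // !mod2E // d7E // Hscl.
  +
    move=> /eqP ->. rewrite ltnn /= AL5 // a7E //; by rewrite Hn.
  +
    move=> /eqP ->. rewrite Hr1 ltnn /= AL5 // a7E //; by rewrite Hn.
  +
    move=> /and5P [Hrem Hke /eqP Hc1 /eqP Hc2 /eqP HRM].
    rewrite Hr1 Hr2 /=.
    have Hd : solve m (Pt (pe (LF (scl s e)).2)) (Pt (qe (LF (scl s e)).2))
      (dlt m (red m (sc s (pe e) + g)) (red m (sc s (qe e) + g))) = 1.
      have [_ _ HP] := gA Hke.
      have H1m : 1 <= 1 < m by lia.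
      have := AL1 (d := 1) (g := g) Hm Hm3 H1m Hg (Pt_le _) (Pt_le _) HP.
      by rewrite !muln1 -Hc1 -Hc2.
    rewrite Hd Hi Hrem /= HRM /= AL5 // a7E //; by rewrite Hn.
-
  move/negbT: Hs => Hs.
  have [Hk Hd Hnr] := validD Hv Hs.
  set k := n %% 4. set d := n %/ 4 + 1.
  have [He1 Ha1] := gB Hk Hp.
  have [He2 Ha2] := gB Hk Hq.
  have Hr1 : red m (Pt (pe e) * d + g) < m by apply: red_lt; move: (Pt_le (pe e)); nia.
  have Hr2 : red m (Pt (qe e) * d + g) < m by apply: red_lt; move: (Pt_le (qe e)); nia.
  rewrite !div2E // !mod2E // d7E // Hr1 Hr2 /=.
  have -> : (eta k (pe e), eta k (qe e), (av k (qe e) + 7 - av k (pe e)) %% 7) = dcl k e by [].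
  rewrite gD //=.
  rewrite AL1 //; try exact: Pt_le.
  rewrite (negPf Hnr) /=.
  rewrite AL2 //; [|lia|exact: Pt_le].
  rewrite a7E //. congr (_, _). rewrite /d /k; lia.
Qed.

Lemma sub_lt c g : g < m -> c <= 2 -> sub m g c < m.
Proof. move=> *; crush. Qed.
Lemma sub_lt' c g : g < m -> c < m -> sub m g c < m.
Proof. move=> *; crush. Qed.
Lemma a7F u a0 : u < 7 -> a0 < 7 -> (u + (a0 + 7 - u) %% 7) %% 7 = a0.
Proof. move=> *; lia. Qed.
Lemma a7G u v a0 a1 : u < 7 -> v < 7 -> a0 < 7 -> a1 < 7 ->
  (v + 7 - u) %% 7 = (a1 + 7 - a0) %% 7 -> (v + (a0 + 7 - u) %% 7) %% 7 = a1.
Proof. move=> *; lia. Qed.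
Lemma a7H u v a0 a1 : u < 7 -> v < 7 -> a0 < 7 -> a1 < 7 ->
  (v + 7 - u) %% 7 = (a1 + 7 - a0) %% 7 -> (u + (a1 + 7 - v) %% 7) %% 7 = a0.
Proof. move=> *; lia. Qed.

Lemma kindE s e : [/\ (kind s e == 0) = (~~ sinf s (pe e) && ~~ sinf s (qe e)),
                  (kind s e == 1) = (sinf s (pe e) && ~~ sinf s (qe e)) &
                  (kind s e == 2) = (~~ sinf s (pe e) && sinf s (qe e))].
Proof. by rewrite /kind; case: (sinf s (pe e)); case: (sinf s (qe e)). Qed.

Lemma decE J a J' a' : J < 2 * x -> J' < 2 * x -> a < 7 -> a' < 7 -> J %/ 2 != J' %/ 2 ->
  let r := dec J a J' a' in
  [/\ valid r.1, r.2.1 < m, r.2.2 < 7 &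
   exists2 e, e < 7 & [/\ VJ r.1 r.2.1 (pe e) = J, VA r.1 r.2.2 (pe e) = a,
                        VJ r.1 r.2.1 (qe e) = J' & VA r.1 r.2.2 (qe e) = a']].
Proof.
move=> HJ HJ' Ha Ha' Hgg.
rewrite /dec /=.
move Hg: (J %/ 2) => g. move Hh: (J %% 2) => h. move Hg': (J' %/ 2) => g'. move Hh': (J' %% 2) => h'.
move Hdl: ((a' + 7 - a) %% 7) => dl.
rewrite Hg Hg' in Hgg.
have HJe : J = 2 * g + h by lia.
have HJe' : J' = 2 * g' + h' by lia.
have Hh2 : h < 2 by lia. have Hh2' : h' < 2 by lia. have Hdl7 : dl < 7 by lia.
have Hgx : g < m + inf by lia. have Hgx' : g' < m + inf by lia.
case Hgm: (g < m); case Hgm': (g' < m) => /=.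
-
  have [Hk He Hdcl] := gE Hh2 Hh2' Hdl7.
  move: Hk He Hdcl; move: (LF (h, h', dl)) => [k e] /= Hk He Hdcl.
  have [Hp Hq HP] := gA He.
  have := AL3 Hm Hm3 Hgm Hgm' Hgg (Pt_le (pe e)) (Pt_le (qe e)) HP.
  move: (solve m (Pt (pe e)) (Pt (qe e)) (dlt m g g')) => d /= [Hd Hg1 Hg2].
  have [Hep Hap] := gB Hk Hp. have [Heq Haq] := gB Hk Hq.
  move: Hdcl; rewrite /dcl => -[Hdp Hdq Hdd].
  case Hrem: [&& inf, d == 1 & isrem k].
  + move/and3P: Hrem => [Hi /eqP Hd1 Hr].
    have [Hz1 Hz2 Hkind Hscl [Hc1 Hc2]] := gJ Hr He.
    move: Hz1 Hz2 Hkind Hscl Hc1 Hc2; move: (RM k e) => [s e'] /= Hz1 Hz2 Hkind Hscl Hc1 Hc2.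
    have [Hp' Hq' _] := gA Hz2.
    have [Hse1 Hsa1 Hsc1] := gF Hz1 Hp'.
    have [Hse2 Hsa2 Hsc2] := gF Hz1 Hq'.
    move: Hscl; rewrite /scl /dcl => -[Hs1 Hs2 Hs3].
    have [Hk0 _ _] := kindE s e'. rewrite Hkind eqxx in Hk0.
    move/esym/andP: Hk0 => [/negPf Hip /negPf Hiq].
    split.
    * by rewrite /valid Hi leq_addr /= ltn_add2l Hz1 orbT.
    * by apply: sub_lt; lia.
    * simpl; lia.
    * exists e' => //.
      rewrite /VJ /VA /vinf /vgv /veta /vav /isS leq_addr addKn /= Hip Hiq /=.
      rewrite Hs1 Hs2 Hc1 Hc2.
      move: Hg1 Hg2; rewrite Hd1 !muln1.
      have -> : red m (Pt (pe e)) = Pt (pe e) by rewrite /red; have := Pt_le (pe e); case: ifP => //; lia.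
      move=> -> ->.
      split; [lia| |lia|].
      - by rewrite a7F.
      - apply: a7G => //. by rewrite Hs3 Hdd Hdl.
  +
    have Hn : 4 * (d - 1) + k < nd by rewrite /nd; lia.
    have Hn4 : (4 * (d - 1) + k) %/ 4 = d - 1 by lia.
    have Hn4' : (4 * (d - 1) + k) %% 4 = k by lia.
    have HnS : isS (4 * (d - 1) + k) = false by rewrite /isS; lia.
    split.
    * rewrite /valid Hn /= Hn4 Hn4'.
      move: Hrem. have -> : (d - 1 == 0) = (d == 1) by apply/eqP/eqP; lia.
      by move=> ->.
    * simpl; apply: sub_lt' => //. apply: red_lt; [lia| move: (Pt_le (pe e)); nia].
    * simpl; lia.
    * exists e => //.
      rewrite /VJ /VA /vinf /vgv /veta /vav HnS /= Hn4 Hn4'.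
      have -> : d - 1 + 1 = d by lia.
      rewrite Hg1 Hg2 Hdp Hdq.
      split; [lia| by rewrite a7F | lia| apply: a7G => //; by rewrite Hdd Hdl].
-
  have Hi : inf by move: Hgx'; case: inf => //; lia.
  have Hg'm : g' = m by move: Hgx'; rewrite Hi; lia.
  have Hj : (2 == 1) || (2 == 2) by [].
  have [Hz1 Hz2 Hkind Hscl] := gI Hj Hh2 Hh2' Hdl7.
  move: Hz1 Hz2 Hkind Hscl; move: (LK 2 (h, h', dl)) => [s e'] /= Hz1 Hz2 Hkind Hscl.
  have [Hp Hq _] := gA Hz2.
  have [Hse1 Hsa1 Hsc1] := gF Hz1 Hp.
  have [Hse2 Hsa2 Hsc2] := gF Hz1 Hq.
  move: Hscl; rewrite /scl => -[Hs1 Hs2 Hs3].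
  have [_ _ Hk0] := kindE s e'. rewrite Hkind eqxx in Hk0.
  move/esym/andP: Hk0 => [/negPf Hip Hiq].
  split.
  * by rewrite /valid Hi leq_addr /= ltn_add2l Hz1 !orbT.
  * by apply: sub_lt.
  * simpl; lia.
  * exists e' => //.
    rewrite /VJ /VA /vinf /vgv /veta /vav /isS leq_addr addKn /= Hip Hiq /=.
    rewrite AL6 //.
    split; [lia| by rewrite a7F | lia| apply: a7G => //; by rewrite Hs3 Hdl].
-
  have Hi : inf by move: Hgx; case: inf => //; lia.
  have Hgm2 : g = m by move: Hgx; rewrite Hi; lia.
  have Hj : (1 == 1) || (1 == 2) by [].
  have [Hz1 Hz2 Hkind Hscl] := gI Hj Hh2 Hh2' Hdl7.
  move: Hz1 Hz2 Hkind Hscl; move: (LK 1 (h, h', dl)) => [s e'] /= Hz1 Hz2 Hkind Hscl.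
  have [Hp Hq _] := gA Hz2.
  have [Hse1 Hsa1 Hsc1] := gF Hz1 Hp.
  have [Hse2 Hsa2 Hsc2] := gF Hz1 Hq.
  move: Hscl; rewrite /scl => -[Hs1 Hs2 Hs3].
  have [_ Hk0 _] := kindE s e'. rewrite Hkind eqxx in Hk0.
  move/esym/andP: Hk0 => [Hip /negPf Hiq].
  split.
  * by rewrite /valid Hi leq_addr /= ltn_add2l Hz1 !orbT.
  * by apply: sub_lt.
  * simpl; lia.
  * exists e' => //.
    rewrite /VJ /VA /vinf /vgv /veta /vav /isS leq_addr addKn /= Hip Hiq /=.
    rewrite AL6 //.
    split; [lia| apply: a7H => //; by rewrite Hs3 Hdl | lia | by rewrite a7F].
- (* both inf : impossible *)
  exfalso. move: Hgx Hgx' Hgg Hgm Hgm'. case: inf; lia.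
Qed.

Lemma redc c c' g : g < m -> c <= 2 -> c' <= 2 -> red m (c + g) = red m (c' + g) -> c = c'.
Proof. move=> *; crush. Qed.

Lemma pq2 r h r' h' : h <= 1 -> h' <= 1 -> 2 * r + h = 2 * r' + h' -> r = r' /\ h = h'.
Proof. move=> *; lia. Qed.

Lemma VJ_lt n g t : valid n -> g < m -> t < 7 -> VJ n g t < 2 * x.
Proof.
move=> Hv Hg Ht. rewrite /VJ /vinf /vgv /veta.
case Hs: (isS n) => /=.
- have [Hi Hs10 _] := validS Hv Hs.
  have [He1 _ Hc] := gF Hs10 Ht.
  case: (sinf _ _) => /=.
  + rewrite Hxm Hi; lia.
  + have := @red_lt m (sc (n - nd) t + g) m0. lia.
- have [Hk Hd _] := validD Hv (negbT Hs).
  have [He1 _] := gB Hk Ht.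
  have := @red_lt m (Pt t * (n %/ 4 + 1) + g) m0. move: (Pt_le t). nia.
Qed.

Lemma blk_inj n g a t t' : valid n -> g < m -> a < 7 -> t < 7 -> t' < 7 ->
  VJ n g t = VJ n g t' -> VA n a t = VA n a t' -> t = t'.
Proof.
move=> Hv Hg Ha Ht Ht' HJ HA.
case: (eqVneq t t') => // Htt. exfalso.
move: HJ HA. rewrite /VJ /VA /vinf /vgv /veta /vav.
case Hs: (isS n) => /=.
- have [Hi Hs10 _] := validS Hv Hs.
  move: Hs10; move: (n - nd) => s Hs10.
  have [He1 Ha1 Hc1] := gF Hs10 Ht.
  have [He2 Ha2 Hc2] := gF Hs10 Ht'.
  have Hr1 := @red_lt m (sc s t + g) m0.
  have Hr2 := @red_lt m (sc s t' + g) m0.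
  have := gG Hs10 Ht Ht' Htt.
  case: (sinf s t); case: (sinf s t') => /=.
  + move=> /orP [/eqP|/eqP] H1 H2 H3; lia.
  + move=> _ H; exfalso; move: H; lia.
  + move=> _ H; exfalso; move: H; lia.
  + move=> H HJ HA.
    have [HR HE] := pq2 He1 He2 HJ.
    have HC := redc Hg Hc1 Hc2 HR.
    move: H; rewrite HC HE eqxx /=.
    move=> /eqP; lia.
- have [Hk Hd _] := validD Hv (negbT Hs).
  move: Hk Hd; move: (n %% 4) (n %/ 4 + 1) => k d Hk Hd.
  have [He1 Ha1] := gB Hk Ht. have [He2 Ha2] := gB Hk Ht'.
  move=> HJ HA.
  have [HR HE] := pq2 He1 He2 HJ.
  have := gC Hk Ht Ht' Htt.
  case: (eqVneq (Pt t) (Pt t')) => [HP|HP] /=.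
  + rewrite HE eqxx /= => /eqP; lia.
  + move: (AL4 Hm Hm3 Hd Hg (Pt_le t) (Pt_le t') HP). by rewrite HR eqxx.
Qed.

Lemma blk_K n g e : valid n -> g < m -> e < 7 -> VJ n g (pe e) %/ 2 != VJ n g (qe e) %/ 2.
Proof.
move=> Hv Hg He.
have [Hp Hq HP] := gA He.
rewrite /VJ /vinf /vgv /veta.
case Hs: (isS n) => /=.
- have [Hi Hs10 _] := validS Hv Hs.
  move: Hs10; move: (n - nd) => s Hs10.
  have [He1 Ha1 Hc1] := gF Hs10 Hp.
  have [He2 Ha2 Hc2] := gF Hs10 Hq.
  have Hr1 := @red_lt m (sc s (pe e) + g) m0.
  have Hr2 := @red_lt m (sc s (qe e) + g) m0.
  have := gH Hs10 He. rewrite /kind.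
  case: (sinf s (pe e)); case: (sinf s (qe e)) => //= H; rewrite ?div2E //; apply/eqP; try lia.
  move: H => /and5P [_ Hke /eqP Hc1' /eqP Hc2' _] HR.
  have [_ _ HP'] := gA Hke.
  move: HP'. rewrite -Hc1' -Hc2' (redc Hg Hc1 Hc2 HR). by rewrite eqxx.
- have [Hk Hd _] := validD Hv (negbT Hs).
  move: Hk Hd; move: (n %% 4) (n %/ 4 + 1) => k d Hk Hd.
  have [He1 Ha1] := gB Hk Hp. have [He2 Ha2] := gB Hk Hq.
  rewrite !div2E //. exact: AL4 Hm Hm3 Hd Hg (Pt_le _) (Pt_le _) HP.
Qed.

Lemma valid_lt n : valid n -> n < nd + 10.
Proof. rewrite /valid; lia. Qed.

Lemma pos2x : 0 < 2 * x. Proof. lia. Qed.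

Definition mkV (J a : nat) : Vx x := (Ordinal (ltn_pmod J pos2x), Ordinal (ltn_pmod a (isT : 0 < 7))).
Definition GAL := [seq (g, a) | g <- iota 0 m, a <- iota 0 7].
Definition LL := [seq (n, ga) | n <- iota 0 (nd + 10), ga <- GAL].
Definition blk (z : nat * (nat * nat)) : {ffun 'I_7 -> Vx x} :=
  [ffun t : 'I_7 => mkV (VJ z.1 z.2.1 t) (VA z.1 z.2.2 t)].
Definition BB := [seq blk z | z <- LL & valid z.1].

Lemma memL z : (z \in LL) = [&& z.1 < nd + 10, z.2.1 < m & z.2.2 < 7].
Proof.
case: z => n [g a].
apply/allpairsP/and3P => [[[n' ga] [Hn Hga E]]|[Hn Hg Ha]].
- case: E => -> E2. rewrite E2. move: Hn; rewrite inI => Hn.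
  move/allpairsP: Hga => [[g' a'] [Hg Ha E3]]. rewrite E3.
  move: Hg Ha; rewrite !inI => Hg Ha. by split.
- exists (n, (g, a)); split; first by rewrite inI.
  + by apply/allpairsP; exists (g, a); split; rewrite ?inI.
  + by [].
Qed.

Lemma uniqL : uniq LL.
Proof.
apply: allpairs_uniq; first exact: iota_uniq.
- apply: allpairs_uniq; [exact: iota_uniq|exact: iota_uniq|].
  by move=> [? ?] [? ?] _ _ /= [-> ->].
- by move=> [? ?] [? ?] _ _ /= [-> ->].
Qed.

Lemma copyP (f : {ffun 'I_7 -> Vx x}) u v :
  reflect (exists2 e, e < 7 & f (inord (pe e)) = u /\ f (inord (qe e)) = v)
          ((u, v) \in copy_arcs A f).
Proof.
rewrite /copy_arcs. apply: (iffP mapP) => [[p Hp [-> ->]]|[e He [<- <-]]].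
- move/(nthP (0, 0)): Hp => [e He <-]. exists e => //. by rewrite -sizeA.
- exists (nth (0, 0) A e) => //. by apply: mem_nth; rewrite sizeA.
Qed.

Lemma blkE z (t : nat) : t < 7 -> blk z (inord t) = mkV (VJ z.1 z.2.1 t) (VA z.1 z.2.2 t).
Proof. by move=> Ht; rewrite ffunE inordK. Qed.

Lemma mkV1 J a : J < 2 * x -> ((mkV J a).1 : nat) = J.
Proof. by move=> H; rewrite /= modn_small. Qed.
Lemma mkV2 J a : a < 7 -> ((mkV J a).2 : nat) = a.
Proof. by move=> H; rewrite /= modn_small. Qed.
Lemma mkVu (u : Vx x) : mkV u.1 u.2 = u.
Proof.
case: u => [J a]. rewrite /mkV. congr (_, _); apply: val_inj; rewrite /= modn_small //.
Qed.

Lemma VA_lt n a t : VA n a t < 7. Proof. by rewrite /VA ltn_pmod. Qed.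

Theorem main_dec : is_decomposition (@Kx x) A BB.
Proof.
split.
- move=> f /mapP [z]; rewrite mem_filter => /andP [Hv HzL] ->.
  move: HzL; rewrite memL => /and3P [Hn Hg Ha].
  split.
  + move=> t1 t2; rewrite !ffunE => E.
    have E1 := congr1 (fun w : Vx x => nat_of_ord w.1) E.
    have E2 := congr1 (fun w : Vx x => nat_of_ord w.2) E.
    rewrite /= !modn_small ?(VJ_lt Hv Hg) ?VA_lt // in E1 E2.
    apply: val_inj; exact: blk_inj Hv Hg Ha (ltn_ord t1) (ltn_ord t2) E1 E2.
  + move=> [u v] /copyP [e He [<- <-]].
    have [Hp Hq _] := gA He.
    rewrite /Kx /= !blkE // !mkV1 ?(VJ_lt Hv Hg) //.
    exact: blk_K.
- move=> u v Huv.
  rewrite /BB count_map count_filter.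
  set r := dec u.1 u.2 v.1 v.2.
  have [Hvr Hgr Har [e He [E1 E2 E3 E4]]] :
    let r := dec u.1 u.2 v.1 v.2 in
    [/\ valid r.1, r.2.1 < m, r.2.2 < 7 &
     exists2 e, e < 7 & [/\ VJ r.1 r.2.1 (pe e) = u.1, VA r.1 r.2.2 (pe e) = u.2,
                          VJ r.1 r.2.1 (qe e) = v.1 & VA r.1 r.2.2 (qe e) = v.2]].
    apply: decE; [exact: ltn_ord|exact: ltn_ord|exact: ltn_ord|exact: ltn_ord|exact: Huv].
  have Hbnd := valid_lt Hvr.
  rewrite (@eq_in_count _ _ (pred1 r)).
  + by rewrite count_uniq_mem ?uniqL // memL Hbnd Hgr Har.
  + move=> z Hz /=. apply/idP/eqP.
    * move=> /andP [/copyP [e' He' [Hu Hv]] Hvz].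
      move: Hz; rewrite memL => /and3P [Hn Hg Ha].
      have [Hp Hq _] := gA He'.
      rewrite /r -Hu -Hv !blkE // !mkV1 ?mkV2 ?VA_lt ?(VJ_lt Hvz Hg) //.
      case: z Hvz Hg Ha {Hn Hu Hv} => n [g a] /= Hvz Hg Ha.
      by rewrite decU.
    * move=> ->. rewrite Hvr andbT. apply/copyP. exists e => //.
      have [Hp Hq _] := gA He.
      by rewrite !blkE // E1 E2 E3 E4 !mkVu.
Qed.

End Main.

Theorem gen_main x : 3 <= x -> exists B : seq {ffun 'I_7 -> Vx x}, is_decomposition (@Kx x) A B.
Proof.
move=> Hx.
have Hxm : x = (x - ~~ odd x) + ~~ odd x by case: (odd x) => /=; lia.
have Hm : odd (x - ~~ odd x) by case Ho: (odd x) => /=; lia.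
have Hm3 : 3 <= x - ~~ odd x by case Ho: (odd x) => /=; lia.
eexists; exact: (main_dec Hxm Hm Hm3).
Qed.
End Gen.
Definition eL1 := [:: [:: 1; 0; 1; 0; 0; 0; 0]; [:: 0; 1; 1; 0; 1; 0; 0]; [:: 1; 1; 1; 1; 0; 1; 0]; [:: 1; 1; 1; 0; 0; 0; 1]].
Definition aL1 := [:: [:: 0; 6; 5; 5; 0; 0; 3]; [:: 0; 1; 0; 5; 5; 0; 1]; [:: 0; 2; 6; 6; 3; 1; 4]; [:: 0; 5; 6; 0; 5; 2; 4]].
Definition sK1 := [:: [:: 0; 0; 0; 0; 1; 0; 1]; [:: 1; 0; 1; 0; 0; 1; 0]; [:: 0; 1; 0; 1; 0; 0; 1]; [:: 1; 0; 1; 0; 1; 0; 0]; [:: 0; 1; 0; 1; 0; 1; 0]; [:: 0; 1; 0; 0; 0; 0; 1]; [:: 1; 0; 1; 0; 1; 0; 0]; [:: 0; 1; 0; 1; 0; 1; 0]; [:: 0; 0; 1; 0; 1; 0; 1]; [:: 1; 0; 0; 1; 0; 1; 0]].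
Definition sC1 := [:: [:: 0; 1; 0; 1; 0; 0; 0]; [:: 0; 0; 0; 1; 0; 0; 0]; [:: 0; 0; 0; 0; 0; 1; 0]; [:: 0; 0; 0; 0; 0; 1; 2]; [:: 0; 0; 0; 0; 0; 0; 2]; [:: 0; 0; 0; 1; 0; 1; 0]; [:: 0; 0; 0; 0; 0; 1; 2]; [:: 0; 0; 0; 0; 0; 0; 2]; [:: 0; 1; 0; 0; 0; 0; 0]; [:: 0; 1; 0; 0; 0; 0; 0]].
Definition sE1 := [:: [:: 1; 1; 1; 0; 0; 1; 0]; [:: 1; 0; 0; 0; 0; 0; 0]; [:: 1; 1; 1; 0; 0; 0; 0]; [:: 0; 0; 1; 0; 0; 0; 1]; [:: 1; 0; 1; 1; 0; 1; 1]; [:: 0; 1; 1; 0; 1; 0; 1]; [:: 1; 1; 1; 1; 0; 0; 0]; [:: 0; 1; 1; 1; 1; 0; 0]; [:: 0; 1; 0; 1; 0; 0; 1]; [:: 1; 1; 1; 1; 0; 0; 1]].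
Definition sA1 := [:: [:: 0; 5; 6; 0; 5; 4; 3]; [:: 1; 4; 0; 0; 5; 4; 1]; [:: 4; 0; 0; 0; 5; 2; 6]; [:: 0; 6; 0; 1; 1; 2; 4]; [:: 0; 5; 5; 6; 5; 3; 4]; [:: 1; 5; 0; 5; 5; 0; 3]; [:: 0; 5; 2; 0; 4; 0; 1]; [:: 0; 5; 4; 4; 0; 2; 1]; [:: 0; 1; 6; 2; 3; 5; 0]; [:: 4; 1; 0; 5; 2; 4; 5]].

Lemma good1 : good (D_arcs 1) eL1 aL1 sK1 sC1 sE1 sA1 3 1.
Proof. by vm_compute. Qed.

Definition eL2 := [:: [:: 0; 0; 0; 0; 1; 0; 1]; [:: 1; 0; 0; 0; 1; 1; 0]; [:: 1; 1; 1; 0; 0; 1; 1]; [:: 0; 0; 1; 1; 1; 0; 1]].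
Definition aL2 := [:: [:: 0; 6; 6; 2; 2; 1; 2]; [:: 0; 4; 0; 2; 4; 0; 1]; [:: 0; 0; 3; 3; 1; 6; 1]; [:: 0; 1; 5; 3; 4; 6; 3]].
Definition sK2 := [:: [:: 0; 0; 0; 0; 1; 0; 1]; [:: 1; 0; 1; 0; 0; 1; 0]; [:: 0; 1; 0; 1; 0; 0; 1]; [:: 1; 0; 1; 0; 1; 0; 0]; [:: 0; 1; 0; 1; 0; 1; 0]; [:: 0; 1; 0; 0; 0; 0; 1]; [:: 1; 0; 1; 0; 1; 0; 0]; [:: 0; 1; 0; 1; 0; 1; 0]; [:: 0; 0; 1; 0; 1; 0; 1]; [:: 1; 0; 0; 1; 0; 1; 0]].
Definition sC2 := [:: [:: 0; 1; 0; 1; 0; 0; 0]; [:: 0; 0; 0; 1; 0; 0; 0]; [:: 0; 0; 0; 0; 0; 1; 0]; [:: 0; 0; 0; 0; 0; 1; 2]; [:: 0; 0; 0; 0; 0; 0; 2]; [:: 0; 0; 0; 1; 0; 1; 0]; [:: 0; 0; 0; 0; 0; 1; 2]; [:: 0; 0; 0; 0; 0; 0; 2]; [:: 0; 1; 0; 0; 0; 0; 0]; [:: 0; 1; 0; 0; 0; 0; 0]].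
Definition sE2 := [:: [:: 0; 0; 1; 1; 1; 0; 0]; [:: 0; 0; 1; 1; 1; 0; 0]; [:: 1; 1; 1; 1; 1; 0; 0]; [:: 1; 0; 0; 0; 0; 0; 1]; [:: 0; 0; 1; 0; 1; 0; 1]; [:: 1; 1; 0; 0; 1; 1; 1]; [:: 1; 0; 0; 1; 0; 1; 0]; [:: 1; 1; 1; 1; 0; 1; 0]; [:: 1; 0; 1; 0; 0; 1; 0]; [:: 0; 0; 0; 1; 0; 1; 1]].
Definition sA2 := [:: [:: 0; 1; 5; 3; 5; 2; 6]; [:: 5; 0; 1; 3; 4; 1; 5]; [:: 6; 3; 0; 0; 4; 6; 0]; [:: 4; 4; 6; 2; 4; 6; 3]; [:: 0; 0; 2; 1; 6; 2; 3]; [:: 5; 5; 0; 2; 4; 0; 4]; [:: 3; 2; 3; 6; 0; 0; 1]; [:: 0; 2; 3; 1; 4; 3; 1]; [:: 0; 4; 4; 5; 1; 3; 3]; [:: 3; 4; 0; 4; 6; 2; 1]].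

Lemma good2 : good (D_arcs 2) eL2 aL2 sK2 sC2 sE2 sA2 3 1.
Proof. by vm_compute. Qed.

Definition eL3 := [:: [:: 0; 0; 1; 1; 0; 1; 1]; [:: 1; 0; 0; 0; 1; 1; 0]; [:: 0; 0; 1; 1; 1; 0; 0]; [:: 0; 1; 0; 0; 1; 1; 1]].
Definition aL3 := [:: [:: 0; 6; 1; 3; 6; 0; 3]; [:: 0; 2; 0; 0; 4; 4; 4]; [:: 0; 4; 3; 6; 5; 6; 5]; [:: 0; 1; 3; 6; 6; 0; 2]].
Definition sK3 := [:: [:: 0; 0; 0; 0; 1; 0; 1]; [:: 1; 0; 1; 0; 0; 1; 0]; [:: 0; 1; 0; 1; 0; 0; 1]; [:: 1; 0; 1; 0; 1; 0; 0]; [:: 0; 1; 0; 1; 0; 1; 0]; [:: 0; 1; 0; 0; 0; 0; 1]; [:: 1; 0; 1; 0; 1; 0; 0]; [:: 0; 1; 0; 1; 0; 1; 0]; [:: 0; 0; 1; 0; 1; 0; 1]; [:: 1; 0; 0; 1; 0; 1; 0]].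
Definition sC3 := [:: [:: 0; 1; 0; 1; 0; 0; 0]; [:: 0; 0; 0; 1; 0; 0; 0]; [:: 0; 0; 0; 0; 0; 1; 0]; [:: 0; 0; 0; 0; 0; 1; 2]; [:: 0; 0; 0; 0; 0; 0; 2]; [:: 0; 0; 0; 1; 0; 1; 0]; [:: 0; 0; 0; 0; 0; 1; 2]; [:: 0; 0; 0; 0; 0; 0; 2]; [:: 0; 1; 0; 0; 0; 0; 0]; [:: 0; 1; 0; 0; 0; 0; 0]].
Definition sE3 := [:: [:: 0; 1; 0; 0; 1; 1; 0]; [:: 0; 1; 1; 0; 1; 1; 1]; [:: 1; 1; 0; 0; 1; 1; 1]; [:: 1; 0; 0; 1; 0; 1; 1]; [:: 0; 1; 0; 0; 0; 0; 1]; [:: 0; 0; 0; 0; 1; 1; 0]; [:: 1; 1; 0; 0; 1; 1; 0]; [:: 1; 1; 1; 0; 1; 1; 0]; [:: 1; 0; 0; 0; 1; 0; 0]; [:: 1; 0; 0; 1; 0; 0; 1]].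
Definition sA3 := [:: [:: 0; 1; 3; 6; 4; 4; 3]; [:: 5; 0; 2; 6; 6; 0; 3]; [:: 1; 3; 5; 3; 6; 0; 4]; [:: 0; 1; 2; 6; 3; 0; 2]; [:: 0; 4; 2; 1; 6; 2; 2]; [:: 1; 1; 0; 0; 4; 4; 5]; [:: 4; 1; 1; 2; 3; 4; 4]; [:: 0; 5; 4; 2; 1; 0; 4]; [:: 0; 2; 0; 3; 5; 6; 6]; [:: 6; 2; 0; 0; 6; 1; 6]].

Lemma good3 : good (D_arcs 3) eL3 aL3 sK3 sC3 sE3 sA3 3 1.
Proof. by vm_compute. Qed.

Definition eL4 := [:: [:: 1; 0; 1; 0; 0; 0; 0]; [:: 0; 1; 1; 0; 1; 0; 0]; [:: 1; 1; 1; 1; 0; 1; 0]; [:: 1; 1; 1; 0; 0; 0; 1]].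
Definition aL4 := [:: [:: 0; 6; 5; 5; 0; 0; 3]; [:: 0; 1; 0; 5; 4; 0; 1]; [:: 0; 6; 6; 1; 3; 5; 0]; [:: 0; 2; 5; 2; 5; 0; 3]].
Definition sK4 := [:: [:: 0; 0; 0; 0; 1; 0; 1]; [:: 1; 0; 1; 0; 0; 1; 0]; [:: 0; 1; 0; 1; 0; 0; 1]; [:: 1; 0; 1; 0; 1; 0; 0]; [:: 0; 1; 0; 1; 0; 1; 0]; [:: 0; 1; 0; 0; 0; 0; 1]; [:: 1; 0; 1; 0; 1; 0; 0]; [:: 0; 1; 0; 1; 0; 1; 0]; [:: 0; 0; 1; 0; 1; 0; 1]; [:: 1; 0; 0; 1; 0; 1; 0]].
Definition sC4 := [:: [:: 0; 1; 0; 1; 0; 0; 0]; [:: 0; 0; 0; 1; 0; 0; 0]; [:: 0; 0; 0; 0; 0; 1; 0]; [:: 0; 0; 0; 0; 0; 1; 2]; [:: 0; 0; 0; 0; 0; 0; 2]; [:: 0; 0; 0; 1; 0; 1; 0]; [:: 0; 0; 0; 0; 0; 1; 2]; [:: 0; 0; 0; 0; 0; 0; 2]; [:: 0; 1; 0; 0; 0; 0; 0]; [:: 0; 1; 0; 0; 0; 0; 0]].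
Definition sE4 := [:: [:: 1; 1; 1; 0; 0; 0; 1]; [:: 1; 1; 1; 0; 0; 1; 0]; [:: 0; 0; 1; 0; 0; 0; 1]; [:: 0; 0; 0; 1; 0; 0; 1]; [:: 1; 1; 1; 0; 0; 0; 1]; [:: 0; 1; 1; 0; 1; 0; 0]; [:: 1; 0; 0; 1; 1; 0; 0]; [:: 0; 0; 1; 0; 1; 0; 0]; [:: 0; 1; 0; 1; 1; 1; 1]; [:: 1; 1; 1; 1; 1; 1; 0]].
Definition sA4 := [:: [:: 0; 2; 5; 2; 1; 0; 0]; [:: 0; 1; 4; 2; 5; 3; 6]; [:: 4; 6; 6; 0; 5; 0; 4]; [:: 6; 6; 4; 5; 0; 0; 3]; [:: 0; 2; 5; 5; 6; 0; 3]; [:: 6; 5; 0; 5; 4; 0; 4]; [:: 0; 4; 0; 2; 3; 0; 1]; [:: 0; 3; 2; 1; 3; 5; 1]; [:: 0; 1; 5; 2; 1; 5; 5]; [:: 5; 1; 0; 1; 6; 4; 3]].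

Lemma good4 : good (D_arcs 4) eL4 aL4 sK4 sC4 sE4 sA4 3 1.
Proof. by vm_compute. Qed.

Definition eL5 := [:: [:: 0; 0; 1; 1; 0; 0; 1]; [:: 1; 1; 1; 1; 0; 0; 1]; [:: 1; 1; 0; 0; 1; 0; 1]; [:: 0; 0; 1; 0; 1; 0; 0]].
Definition aL5 := [:: [:: 0; 0; 0; 5; 6; 3; 2]; [:: 0; 2; 2; 6; 3; 6; 1]; [:: 0; 6; 3; 2; 3; 6; 3]; [:: 0; 5; 6; 1; 1; 3; 1]].
Definition sK5 := [:: [:: 0; 0; 0; 0; 1; 0; 1]; [:: 1; 0; 1; 0; 0; 1; 0]; [:: 0; 1; 0; 1; 0; 0; 1]; [:: 1; 0; 1; 0; 1; 0; 0]; [:: 0; 1; 0; 1; 0; 1; 0]; [:: 0; 1; 0; 0; 0; 0; 1]; [:: 1; 0; 1; 0; 1; 0; 0]; [:: 0; 1; 0; 1; 0; 1; 0]; [:: 0; 0; 1; 0; 1; 0; 1]; [:: 1; 0; 0; 1; 0; 1; 0]].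
Definition sC5 := [:: [:: 0; 1; 0; 1; 0; 0; 0]; [:: 0; 0; 0; 1; 0; 0; 0]; [:: 0; 0; 0; 0; 0; 1; 0]; [:: 0; 0; 0; 0; 0; 1; 2]; [:: 0; 0; 0; 0; 0; 0; 2]; [:: 0; 0; 0; 1; 0; 1; 0]; [:: 0; 0; 0; 0; 0; 1; 2]; [:: 0; 0; 0; 0; 0; 0; 2]; [:: 0; 1; 0; 0; 0; 0; 0]; [:: 0; 1; 0; 0; 0; 0; 0]].
Definition sE5 := [:: [:: 0; 0; 1; 0; 1; 1; 0]; [:: 0; 1; 0; 0; 1; 0; 1]; [:: 1; 0; 0; 0; 1; 0; 0]; [:: 1; 0; 1; 1; 1; 0; 0]; [:: 0; 0; 0; 1; 1; 0; 0]; [:: 0; 1; 1; 1; 0; 0; 0]; [:: 1; 1; 1; 1; 0; 0; 1]; [:: 1; 1; 0; 0; 1; 1; 1]; [:: 1; 1; 0; 0; 1; 0; 1]; [:: 0; 1; 1; 1; 0; 1; 0]].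
Definition sA5 := [:: [:: 0; 5; 6; 1; 5; 4; 5]; [:: 2; 2; 1; 1; 1; 3; 6]; [:: 5; 5; 6; 6; 1; 3; 0]; [:: 0; 5; 1; 6; 3; 3; 1]; [:: 0; 1; 6; 5; 6; 3; 1]; [:: 5; 3; 2; 6; 3; 6; 2]; [:: 6; 0; 4; 4; 2; 6; 1]; [:: 0; 2; 2; 1; 5; 1; 1]; [:: 0; 2; 3; 5; 1; 4; 5]; [:: 1; 2; 2; 5; 3; 1; 0]].

Lemma good5 : good (D_arcs 5) eL5 aL5 sK5 sC5 sE5 sA5 3 1.
Proof. by vm_compute. Qed.

Definition eL6 := [:: [:: 1; 1; 1; 1; 0; 0; 1]; [:: 0; 1; 1; 1; 1; 0; 1]; [:: 0; 0; 1; 0; 1; 0; 0]; [:: 1; 0; 0; 0; 0; 1; 0]].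
Definition aL6 := [:: [:: 0; 5; 6; 0; 1; 6; 0]; [:: 0; 5; 1; 6; 2; 6; 1]; [:: 0; 4; 1; 5; 5; 1; 0]; [:: 0; 2; 1; 5; 3; 3; 1]].
Definition sK6 := [:: [:: 0; 0; 0; 0; 1; 0; 1]; [:: 1; 0; 1; 0; 0; 1; 0]; [:: 0; 1; 0; 1; 0; 0; 1]; [:: 1; 0; 1; 0; 1; 0; 0]; [:: 0; 1; 0; 1; 0; 1; 0]; [:: 0; 1; 0; 0; 0; 0; 1]; [:: 1; 0; 1; 0; 1; 0; 0]; [:: 0; 1; 0; 1; 0; 1; 0]; [:: 0; 0; 1; 0; 1; 0; 1]; [:: 1; 0; 0; 1; 0; 1; 0]].
Definition sC6 := [:: [:: 0; 1; 0; 1; 0; 0; 0]; [:: 0; 0; 0; 1; 0; 0; 0]; [:: 0; 0; 0; 0; 0; 1; 0]; [:: 0; 0; 0; 0; 0; 1; 2]; [:: 0; 0; 0; 0; 0; 0; 2]; [:: 0; 0; 0; 1; 0; 1; 0]; [:: 0; 0; 0; 0; 0; 1; 2]; [:: 0; 0; 0; 0; 0; 0; 2]; [:: 0; 1; 0; 0; 0; 0; 0]; [:: 0; 1; 0; 0; 0; 0; 0]].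
Definition sE6 := [:: [:: 1; 0; 0; 0; 0; 1; 1]; [:: 0; 1; 0; 0; 0; 1; 1]; [:: 1; 0; 0; 0; 0; 1; 1]; [:: 1; 0; 1; 0; 1; 1; 0]; [:: 1; 1; 0; 1; 1; 0; 0]; [:: 1; 0; 1; 1; 1; 0; 0]; [:: 0; 0; 0; 1; 1; 0; 1]; [:: 0; 0; 0; 1; 0; 1; 1]; [:: 0; 1; 0; 0; 0; 1; 1]; [:: 1; 1; 1; 0; 0; 1; 1]].
Definition sA6 := [:: [:: 0; 2; 1; 5; 6; 5; 6]; [:: 3; 5; 0; 5; 3; 2; 6]; [:: 1; 0; 1; 1; 3; 3; 3]; [:: 4; 5; 6; 4; 5; 3; 1]; [:: 0; 4; 4; 6; 1; 4; 1]; [:: 4; 4; 1; 6; 2; 6; 2]; [:: 1; 3; 2; 5; 4; 6; 1]; [:: 0; 1; 4; 1; 5; 2; 1]; [:: 0; 5; 6; 6; 1; 2; 5]; [:: 3; 5; 1; 3; 6; 6; 6]].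

Lemma good6 : good (D_arcs 6) eL6 aL6 sK6 sC6 sE6 sA6 3 1.
Proof. by vm_compute. Qed.

Definition eL7 := [:: [:: 0; 0; 1; 1; 1; 0; 0]; [:: 1; 0; 1; 1; 0; 1; 1]; [:: 0; 1; 0; 1; 0; 1; 0]; [:: 0; 0; 0; 0; 1; 1; 1]].
Definition aL7 := [:: [:: 0; 3; 4; 1; 5; 5; 2]; [:: 0; 3; 5; 0; 5; 1; 6]; [:: 0; 5; 1; 2; 3; 3; 5]; [:: 0; 0; 6; 5; 4; 3; 3]].
Definition sK7 := [:: [:: 0; 0; 0; 0; 1; 0; 1]; [:: 1; 0; 1; 0; 0; 1; 0]; [:: 0; 1; 0; 1; 0; 0; 1]; [:: 1; 0; 1; 0; 1; 0; 0]; [:: 0; 1; 0; 1; 0; 1; 0]; [:: 0; 1; 0; 0; 0; 0; 1]; [:: 1; 0; 1; 0; 1; 0; 0]; [:: 0; 1; 0; 1; 0; 1; 0]; [:: 0; 0; 1; 0; 1; 0; 1]; [:: 1; 0; 0; 1; 0; 1; 0]].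
Definition sC7 := [:: [:: 0; 1; 0; 1; 0; 0; 0]; [:: 0; 0; 0; 1; 0; 0; 0]; [:: 0; 0; 0; 0; 0; 1; 0]; [:: 0; 0; 0; 0; 0; 1; 2]; [:: 0; 0; 0; 0; 0; 0; 2]; [:: 0; 0; 0; 1; 0; 1; 0]; [:: 0; 0; 0; 0; 0; 1; 2]; [:: 0; 0; 0; 0; 0; 0; 2]; [:: 0; 1; 0; 0; 0; 0; 0]; [:: 0; 1; 0; 0; 0; 0; 0]].
Definition sE7 := [:: [:: 0; 0; 0; 0; 1; 0; 0]; [:: 1; 1; 0; 0; 1; 0; 0]; [:: 0; 1; 0; 1; 1; 1; 0]; [:: 1; 1; 1; 1; 0; 1; 1]; [:: 0; 0; 1; 1; 0; 1; 1]; [:: 0; 1; 1; 1; 0; 1; 0]; [:: 0; 0; 0; 0; 1; 1; 1]; [:: 1; 0; 1; 1; 0; 0; 1]; [:: 1; 0; 1; 0; 0; 0; 0]; [:: 1; 0; 1; 1; 1; 0; 1]].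
Definition sA7 := [:: [:: 0; 0; 6; 5; 3; 3; 2]; [:: 0; 0; 2; 5; 4; 0; 6]; [:: 5; 2; 1; 0; 4; 3; 5]; [:: 4; 5; 3; 0; 6; 3; 3]; [:: 0; 4; 0; 4; 1; 0; 3]; [:: 1; 3; 5; 0; 5; 1; 6]; [:: 4; 4; 2; 6; 1; 1; 6]; [:: 0; 0; 1; 2; 4; 6; 6]; [:: 0; 3; 0; 0; 6; 5; 1]; [:: 6; 3; 5; 0; 1; 5; 4]].

Lemma good7 : good (D_arcs 7) eL7 aL7 sK7 sC7 sE7 sA7 3 1.
Proof. by vm_compute. Qed.

Definition eL8 := [:: [:: 0; 0; 1; 0; 0; 1; 0]; [:: 1; 0; 0; 0; 0; 1; 1]; [:: 1; 0; 0; 1; 1; 1; 0]; [:: 1; 0; 1; 0; 1; 1; 1]].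
Definition aL8 := [:: [:: 0; 0; 2; 5; 4; 3; 5]; [:: 0; 3; 0; 4; 5; 1; 5]; [:: 0; 6; 1; 6; 1; 0; 0]; [:: 0; 5; 1; 2; 3; 3; 4]].
Definition sK8 := [:: [:: 0; 0; 0; 1; 0; 1; 0]; [:: 0; 1; 0; 0; 1; 0; 1]; [:: 1; 0; 1; 0; 0; 1; 0]; [:: 0; 1; 0; 1; 0; 0; 1]; [:: 1; 0; 1; 0; 1; 0; 0]; [:: 0; 0; 0; 1; 0; 1; 0]; [:: 0; 1; 0; 0; 1; 0; 1]; [:: 1; 0; 1; 0; 0; 1; 0]; [:: 0; 1; 0; 1; 0; 0; 1]; [:: 1; 0; 1; 0; 1; 0; 0]].
Definition sC8 := [:: [:: 0; 1; 0; 0; 0; 0; 2]; [:: 0; 0; 0; 1; 0; 0; 0]; [:: 0; 0; 0; 1; 0; 0; 0]; [:: 0; 0; 0; 0; 0; 1; 0]; [:: 0; 0; 0; 0; 0; 1; 2]; [:: 0; 1; 0; 0; 0; 0; 2]; [:: 0; 0; 0; 1; 0; 0; 0]; [:: 0; 0; 0; 1; 0; 0; 0]; [:: 0; 0; 0; 0; 0; 1; 0]; [:: 0; 0; 0; 0; 0; 1; 2]].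
Definition sE8 := [:: [:: 1; 0; 0; 1; 1; 0; 1]; [:: 1; 1; 0; 0; 1; 1; 0]; [:: 1; 1; 0; 0; 0; 1; 1]; [:: 0; 0; 1; 0; 0; 1; 0]; [:: 1; 1; 0; 0; 1; 1; 1]; [:: 1; 0; 0; 0; 0; 1; 0]; [:: 0; 0; 0; 1; 0; 0; 1]; [:: 1; 1; 1; 1; 1; 0; 0]; [:: 0; 1; 0; 0; 1; 1; 1]; [:: 0; 0; 1; 1; 0; 1; 0]].
Definition sA8 := [:: [:: 0; 3; 0; 4; 2; 4; 5]; [:: 2; 1; 0; 4; 3; 5; 6]; [:: 1; 0; 3; 4; 5; 5; 4]; [:: 2; 4; 0; 0; 5; 1; 6]; [:: 4; 6; 0; 0; 3; 1; 5]; [:: 0; 6; 1; 1; 3; 1; 0]; [:: 4; 0; 1; 6; 4; 3; 6]; [:: 1; 5; 2; 6; 1; 0; 2]; [:: 3; 3; 1; 4; 1; 0; 0]; [:: 1; 4; 2; 2; 2; 0; 0]].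

Lemma good8 : good (D_arcs 8) eL8 aL8 sK8 sC8 sE8 sA8 1 2.
Proof. by vm_compute. Qed.


Theorem lemma3p1 (x i : nat) (hx : 3 <= x) (hi : 1 <= i <= 8) :
  exists B : seq {ffun 'I_7 -> Vx x}, is_decomposition (@Kx x) (D_arcs i) B.
Proof.
case: i hi => [|[|[|[|[|[|[|[|[|i]]]]]]]]] // _.

- exact: (gen_main good1 hx).

- exact: (gen_main good2 hx).

- exact: (gen_main good3 hx).

- exact: (gen_main good4 hx).

- exact: (gen_main good5 hx).

- exact: (gen_main good6 hx).

- exact: (gen_main good7 hx).

- exact: (gen_main good8 hx).

Qed.
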